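(* If $Q$ is a Jordan loop of order $9$, then either $Q$ has exponent $3$ (i.e. $x^3=e$ for all $x\in Q$) or $Q$ is cyclic (i.e. $Q=\langle x\rangle$ for some $x\in Q$).
   Context: A loop is a set $Q$ with a binary operation (juxtaposition) and neutral element $e$ such that for all $a,b$ the equations $ax=b$, $ya=b$ have unique solutions. A Jordan loop is a commutative loop satisfying $x^2(yx)=(x^2y)x$. $x^3$ denotes $x(xx)$. $\langle x\rangle$ denotes the subloop generated by $x$ (the smallest subloop of $Q$ containing $x$). *)

(* Defs.v *)
From mathcomp Require Import all_boot.
Set Implicit Arguments. Unset Strict Implicit. Unset Printing Implicit Defensive.

Definition is_loop (T : Type) (mul : T -> T -> T) (e : T) : Prop :=
  (forall x, mul e x = x) /\ (forall x, mul x e = x) /\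
  (forall a b, exists! x, mul a x = b) /\
  (forall a b, exists! y, mul y a = b).

Definition commutative_op (T : Type) (mul : T -> T -> T) : Prop :=
  forall x y, mul x y = mul y x.

Definition is_jordan_loop (T : Type) (mul : T -> T -> T) (e : T) : Prop :=
  is_loop mul e /\ commutative_op mul /\
  forall x y, mul (mul x x) (mul y x) = mul (mul (mul x x) y) x.

Definition cube (T : Type) (mul : T -> T -> T) (x : T) : T := mul x (mul x x).

Definition is_subloop (T : finType) (mul : T -> T -> T) (e : T) (S : {set T}) : Prop :=
  e \in S /\
  (forall a b, a \in S -> b \in S -> mul a b \in S) /\
  (forall a b x, a \in S -> b \in S -> mul a x = b -> x \in S) /\
  (forall a b y, a \in S -> b \in S -> mul y a = b -> y \in S).

Definition in_gen (T : finType) (mul : T -> T -> T) (e : T) (x y : T) : Prop :=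
  forall S : {set T}, is_subloop mul e S -> x \in S -> y \in S.

Definition loop_cyclic (T : finType) (mul : T -> T -> T) (e : T) : Prop :=
  exists x : T, forall y : T, in_gen mul e x y.

(* Main.v *)
Require Import Defs.
From mathcomp Require Import all_boot.
From mathcomp Require Import zify.
Set Implicit Arguments. Unset Strict Implicit. Unset Printing Implicit Defensive.

Lemma inv_fixed (T : finType) (f : T -> T) :
  involutive f -> odd #|T| -> exists y, f y = y.
Proof.
move=> invf oddT; case: (pickP (fun y => f y == y)) => [y /eqP|Hn]; first by exists y.
exfalso.
have Hne y : f y != y by rewrite Hn.
pose A := [set y | enum_rank y < enum_rank (f y)].
have HC : ~: A = f @: A.
  apply/setP => y; rewrite !inE.
  apply/idP/imsetP.
  - rewrite -leqNgt leq_eqVlt => /orP [/eqP E|lt].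
      by move: (Hne y); rewrite (enum_rank_inj (val_inj E)) eqxx.
    exists (f y); first by rewrite inE invf.
    by rewrite invf.
  - move=> [z]; rewrite inE => lt ->; rewrite invf -leqNgt ltnW //.
have finj : injective f := can_inj invf.
have := cardsC A; rewrite HC card_imset // addnn => E.
by move: oddT; rewrite -E odd_double.
Qed.

Section L.
Variables (T : finType) (mul : T -> T -> T) (e : T).
Hypothesis HJ : is_jordan_loop mul e.
Hypothesis H9 : #|T| = 9.

Lemma lcan a x1 x2 : mul a x1 = mul a x2 -> x1 = x2.
Proof.
case: HJ => [[_ [_ [Hl _]]] _] E.
have [z [_ Hu]] := Hl a (mul a x2).
by rewrite -(Hu _ E) (Hu _ erefl).
Qed.

Lemma rcan a x1 x2 : mul x1 a = mul x2 a -> x1 = x2.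
Proof.
case: HJ => [_ [Hc _]]; rewrite !(Hc _ a); exact: lcan.
Qed.

Lemma sq_surj c : exists y, mul y y = c.
Proof.
case: HJ => [[_ [_ [Hl _]]] [Hc _]].
pose f y := odflt y [pick z | mul y z == c].
have Hf y : mul y (f y) = c.
  rewrite /f; case: pickP => [z /eqP //|H].
  have [z [Hz _]] := Hl y c; by move: (H z); rewrite Hz eqxx.
have invf : involutive f.
  by move=> y; apply: (@lcan (f y)); rewrite Hf Hc Hf.
have oT : odd #|T| by rewrite H9.
have [y Hy] := inv_fixed invf oT.
by exists y; rewrite -{2}Hy Hf.
Qed.

Lemma sq_inj : injective (fun y => mul y y).
Proof.
move=> x y E.
have Hs : [set mul y y | y in T] = setT.
  apply/setP => c; rewrite inE; have [z <-] := sq_surj c.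
  by apply/imsetP; exists z.
have /imset_injP Hi : #|[set mul y y | y in T]| == #|T| by rewrite Hs cardsT.
exact: Hi.
Qed.

Lemma sq_e y : mul y y = e -> y = e.
Proof.
case: HJ => [[Hle _] _] E; apply: sq_inj => /=; by rewrite E Hle.
Qed.

Lemma proper_small (S : {set T}) : is_subloop mul e S -> S != setT -> #|S| <= 4.
Proof.
move=> [_ [_ [Hd _]]] /eqP NT.
have [a aS] : exists a, a \notin S.
  case: (pickP (fun a => a \notin S)) => [a Ha|H]; first by exists a.
  by exfalso; apply: NT; apply/setP => z; rewrite inE; move: (H z) => /= /negbFE.
have Hdis : S :&: [set mul a s | s in S] = set0.
  apply/setP => z; rewrite !inE; apply/negP => /andP [zS /imsetP [s sS E]].
  by move: aS; rewrite (Hd s z a sS zS) //; case: HJ => [_ [Hc _]]; rewrite Hc E.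
have := max_card (S :|: [set mul a s | s in S]).
rewrite cardsU Hdis cards0 subn0 card_imset ?H9 ?addnn;
  last by move=> u v; apply: lcan.
move=> h; rewrite -addnn in h; lia.
Qed.

End L.

Theorem lemma3p6 (T : finType) (mul : T -> T -> T) (e : T) :
  is_jordan_loop mul e -> #|T| = 9 ->
  (forall x : T, cube mul x = e) \/ loop_cyclic mul e.
Proof.
move=> HJ H9.
case: (pickP (fun x => cube mul x != e)) => [x Hx|H]; last first.
  by left => x; move: (H x) => /= /negbFE /eqP.
right; exists x => y S HS xS.
have: S = setT; last by move=> ->; rewrite inE.
apply/eqP; apply/negPn/negP => NT.
have small := proper_small HJ H9 HS NT.
case: (HJ) => [[Hle [Hre _]] [Hc Hj]].
have lc := lcan HJ; have rc := rcan HJ; have se := sq_e HJ H9.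
case: (HS) => eS [Hm _].
set x2 := mul x x; set x3 := mul x x2; set x4 := mul x x3.
have x3e : x3 != e by [].
have xe : x != e by apply/eqP => E; move: Hx; rewrite E /cube !Hle eqxx.
have x2e : x2 != e by apply/eqP => /se E; move: xe; rewrite E eqxx.
have x2x : x2 != x.
  by apply/eqP => E; have E' := lc x x e; rewrite Hre in E'; rewrite (E' E) eqxx in xe.
have x3x : x3 != x.
  by apply/eqP => E; have E' := lc x x2 e; rewrite Hre in E'; rewrite (E' E) eqxx in x2e.
have x3x2 : x3 != x2.
  by apply/eqP => E; have E' := lc x x2 x; rewrite (E' E) eqxx in x2x.
have x4x3 : x4 != x3.
  by apply/eqP => E; have E' := rc x3 x e; rewrite Hle in E'; rewrite (E' E) eqxx in xe.
have x4x : x4 != x.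
  by apply/eqP => E; have E' := lc x x3 e; rewrite Hre in E'; rewrite (E' E) eqxx in x3e.
have x4x2 : x4 != x2.
  by apply/eqP => E; have E' := lc x x3 x; rewrite (E' E) eqxx in x3x.
have x4e : x4 = e.
  apply/eqP/negPn/negP => x4e.
  have U : uniq [:: e; x; x2; x3; x4].
    rewrite /= !inE !negb_or !(eq_sym e) xe x2e x3e x4e.
    by rewrite !(eq_sym x) x2x x3x x4x !(eq_sym x2) x3x2 x4x2 (eq_sym x3) x4x3.
  have sub : [:: e; x; x2; x3; x4] \subset S.
    have xS2 : x2 \in S by rewrite Hm.
    have xS3 : x3 \in S by rewrite Hm.
    have xS4 : x4 \in S by rewrite Hm.
    by apply/subsetP => z; rewrite !inE => /orP[/eqP->|/orP[/eqP->|/orP[/eqP->|/orP[/eqP->|/eqP->]]]].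
  by move: (subset_leq_card sub); rewrite (card_uniqP U) /= leqNgt ltnS small.
have : mul x2 x2 = e.
  by rewrite Hj (Hc x2 x) (Hc x3 x).
by move/se/eqP; rewrite (negbTE x2e).
Qed.
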